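(* Let $(X,T)$ be a dynamical system. The following are equivalent: (1) $(X,T)$ is weakly mixing; (2) there exists a dense $G_\delta$ subset $X'$ of $X$ such that for each $x\in X'$ and all opene $G,U,V\subset X$, the set $n_T(x,G)\cap N_T(U,V)$ is an IP set.
   Context: A dynamical system $(X,T)$: $X$ is a compact metric space with more than one point and without isolated points, $T:X\to X$ a continuous surjection. ''Opene'' means open and nonempty. $N_T(U,V)=\{n\in\mathbb{Z}_+:U\cap T^{-n}V\neq\varnothing\}$, $n_T(x,G)=\{n\in\mathbb{Z}_+:T^nx\in G\}$. $(X,T)$ is weakly mixing if $(X\times X,T\times T)$ is transitive (i.e. $N_{T\times T}(A,B)\neq\varnothing$ for all opene $A,B\subset X\times X$). A set $\mathcal{S}\subset\mathbb{N}$ is an IP set if there is a sequence $(p_i)_{i\ge1}$ in $\mathbb{N}$ with $\{p_{i_1}+\dots+p_{i_k}:k\in\mathbb{N},\ 1\le i_1<\dots<i_k\}\subset\mathcal{S}$. *)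

(* Defs.v *)
From HB Require Import structures.
From mathcomp Require Import all_boot all_order all_algebra.
From mathcomp Require Import all_classical all_reals all_analysis.
Set Implicit Arguments. Unset Strict Implicit. Unset Printing Implicit Defensive.
Import Order.TTheory GRing.Theory Num.Theory.
Local Open Scope classical_set_scope.

Definition opene {T : topologicalType} (A : set T) : Prop := open A /\ A !=set0.

(* N_T(U,V) = { n in Z_+ : U meets T^{-n} V }  (Z_+ includes 0) *)
Definition N_T {T : Type} (f : T -> T) (U V : set T) : set nat :=
  [set n | U `&` (iter n f) @^-1` V !=set0].

Definition n_T {T : Type} (f : T -> T) (x : T) (G : set T) : set nat :=
  [set n | G (iter n f x)].

Definition transitive_sys {T : topologicalType} (f : T -> T) : Prop :=
  forall U V : set T, opene U -> opene V -> N_T f U V !=set0.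

Definition prod_map {T : Type} (f : T -> T) : T * T -> T * T :=
  fun p => (f p.1, f p.2).

Definition weakly_mixing {T : topologicalType} (f : T -> T) : Prop :=
  @transitive_sys (T * T)%type (prod_map f).

Definition IP_set (S : set nat) : Prop :=
  exists p : nat -> nat, (forall i, (0 < p i)%N) /\
    forall s : seq nat, s != [::] -> sorted ltn s -> S (\sum_(i <- s) p i)%N.

Definition G_delta {T : topologicalType} (A : set T) : Prop :=
  exists U : nat -> set T, (forall i, open (U i)) /\ A = \bigcap_i U i.

Definition dynamical_system {R : realType} (X : metricType R) (f : X -> X) : Prop :=
  [/\ compact [set: X],
      exists x y : X, x <> y,
      (forall x : X, ~ open [set x]),
      continuous f &
      (forall y : X, exists x : X, f x = y)].

(* Main.v *)
Require Import Defs.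
From HB Require Import structures.
From mathcomp Require Import all_boot all_order all_algebra.
From mathcomp Require Import all_classical all_reals all_analysis.
From mathcomp Require Import lra.
Set Implicit Arguments. Unset Strict Implicit. Unset Printing Implicit Defensive.
Import Order.TTheory GRing.Theory Num.Theory.
Local Open Scope classical_set_scope.

Lemma iter_prod {T : Type} (f : T -> T) n a b :
  iter n (prod_map f) (a, b) = (iter n f a, iter n f b).
Proof. by elim: n => //= n ->. Qed.

Lemma iter_comm {T : Type} (f : T -> T) m n x :
  iter m f (iter n f x) = iter n f (iter m f x).
Proof. by rewrite -!iterD addnC. Qed.

Lemma open_pre {X : topologicalType} (T : X -> X) n (A : set X) :
  continuous T -> open A -> open (iter n T @^-1` A).
Proof.
move=> cT; elim: n A => [|n IH] A oA //=.
apply: (IH (T @^-1` A)); exact: (proj1 (continuousP T) cT).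
Qed.

Lemma ne_pre {X : Type} (T : X -> X) n (A : set X) :
  (forall y, exists x, T x = y) -> A !=set0 -> iter n T @^-1` A !=set0.
Proof.
move=> sT; elim: n A => [|n IH] A [a Aa] //=; first by exists a.
have [b Tb] := sT a.
by apply: (IH (T @^-1` A)); exists b; rewrite /= Tb.
Qed.

Lemma opene_pre {X : topologicalType} (T : X -> X) n (A : set X) :
  continuous T -> (forall y, exists x, T x = y) -> opene A ->
  opene (iter n T @^-1` A).
Proof. by move=> cT sT [oA nA]; split; [apply: open_pre|apply: ne_pre]. Qed.

Lemma opene_box {X : topologicalType} (A B : set X) :
  opene A -> opene B -> opene (A `*` B).
Proof.
move=> [oA [a Aa]] [oB [b Bb]]; split; last by exists (a, b).
rewrite openE => q [Aq Bq]; exists (A, B) => //; split => /=;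
  apply: open_nbhs_nbhs; split => //.
Qed.

Lemma opene_boxin {X : topologicalType} (O : set (X * X)) :
  opene O -> exists A B, opene A /\ opene B /\ A `*` B `<=` O.
Proof.
move=> [oO [q Oq]]; move: oO; rewrite openE => /(_ q Oq).
move=> [[P Q] /= [Pq Qq] sPQ].
exists P°, Q°; split; [|split].
- split; [exact: open_interior|exists q.1; exact: Pq].
- split; [exact: open_interior|exists q.2; exact: Qq].
- move=> [a b] [/= /interior_subset Pa /interior_subset Qb]; exact: sPQ.
Qed.

Lemma wm_collapse {X : topologicalType} (T : X -> X) (U1 V1 U2 V2 : set X) :
  continuous T -> weakly_mixing T -> opene U1 -> opene V1 -> opene U2 -> opene V2 ->
  exists A B, opene A /\ opene B /\
    forall n, N_T T A B n -> N_T T U1 V1 n /\ N_T T U2 V2 n.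
Proof.
move=> cT wm oU1 oV1 oU2 oV2.
have [k [[y z] [[/= U1y V1z]]]] := wm _ _ (opene_box oU1 oV1) (opene_box oU2 oV2).
rewrite /= iter_prod => -[/= U2y V2z].
exists (U1 `&` iter k T @^-1` U2), (V1 `&` iter k T @^-1` V2).
split; [|split].
- split; last by exists y.
  by apply: openI; [case: oU1|apply: open_pre => //; case: oU2].
- split; last by exists z.
  by apply: openI; [case: oV1|apply: open_pre => //; case: oV2].
- move=> n [w [[U1w U2w] [V1w V2w]]]; split; first by exists w.
  exists (iter k T w); split => //=; by rewrite iter_comm.
Qed.

Lemma wm_trans {X : topologicalType} (T : X -> X) (U V : set X) :
  weakly_mixing T -> opene U -> opene V -> N_T T U V !=set0.
Proof.
move=> wm oU oV.
have [k [[y z] [[/= Uy _]]]] := wm _ _ (opene_box oU oU) (opene_box oV oV).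
rewrite /= iter_prod => -[/= Vy _].
by exists k; exists y.
Qed.

Lemma all_lt_ex (t : seq nat) : exists k, all (fun i => i < k) t.
Proof.
elim: t => [|a t [k Hk]]; first by exists 0.
exists (maxn k a.+1) => /=; rewrite leq_max ltnSn orbT /=.
apply/allP => i /(allP Hk) ik; by rewrite leq_max ik.
Qed.

Lemma rem_lt (k : nat) (t : seq nat) : uniq t -> all (fun i => i < k.+1) t ->
  all (fun i => i < k) (rem k t).
Proof.
move=> ut /allP Ht; apply/allP => i; rewrite (mem_rem_uniq _ ut) => /andP[ik it].
by have := Ht _ it; rewrite ltnS leq_eqVlt (negbTE ik).
Qed.

Lemma nrem_lt (k : nat) (t : seq nat) : k \notin t -> all (fun i => i < k.+1) t ->
  all (fun i => i < k) t.
Proof.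
move=> kt /allP Ht; apply/allP => i it.
have := Ht _ it; rewrite ltnS leq_eqVlt => /orP[/eqP ik|//].
by move: kt; rewrite -ik it.
Qed.

Definition state (X : Type) := (set X * set X * set X * set nat)%type.

Lemma ip_construct {X : topologicalType} (T : X -> X) (x : X) (G U V : set X) :
  continuous T -> (forall y, exists z, T z = y) -> weakly_mixing T ->
  (forall W C D, opene W -> opene C -> opene D -> exists p, (0 < p)%N /\
      W (iter p T x) /\ N_T T C D p /\ W `&` iter p T @^-1` W !=set0) ->
  opene G -> opene U -> opene V -> IP_set (n_T T x G `&` N_T T U V).
Proof.
move=> cT sT wm Px oG oU oV.
pose Inv (st : state X) := let: (W, C, D, Sm) := st in
  [/\ opene W, opene C, opene D,
   (forall s, Sm s -> forall y, W y -> G (iter s T y)) &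
   (forall n, N_T T C D n -> forall s, Sm s -> N_T T U V (n + s))].
pose Q (st : state X) (r : nat * state X) := let: (W, C, D, Sm) := st in
  let: (p, st') := r in
  [/\ (0 < p)%N, W (iter p T x), N_T T C D p,
    st'.2 = [set s | Sm s \/ exists2 s', Sm s' & s = s' + p] & Inv st'].
have step : forall st, exists r, Inv st -> Q st r.
  move=> [[[W C D] Sm]].
  case: (pselect (Inv (W, C, D, Sm))); last first.
    by move=> nI; exists (0, (W, C, D, Sm)) => /nI.
  move=> [oW oC oD HG HN].
  have [E [F [oE [oF HEF]]]] := wm_collapse cT wm oC oD oW oW.
  have [p [p0 [Wp [NEFp WWp]]]] := Px W E F oW oE oF.
  have [NCDp _] := HEF p NEFp.
  have oD' : opene (iter p T @^-1` D) by apply: opene_pre.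
  have [C' [D' [oC' [oD'' HCD']]]] := wm_collapse cT wm oC oD oC oD'.
  exists (p, (W `&` iter p T @^-1` W, C', D',
    [set s | Sm s \/ exists2 s', Sm s' & s = s' + p])) => _.
  split => //; split => //.
  - split => //; apply: openI; [by case: oW|apply: open_pre => //; by case: oW].
  - move=> s [Ss|[s' Ss' ->]] y [Wy Wpy]; first exact: HG.
    rewrite iterD; exact: HG.
  - move=> n /HCD'[Nn Nn'] s [Ss|[s' Ss' ->]]; first exact: HN.
    have Npn : N_T T C D (p + n).
      case: Nn' => z [Cz Dz]; exists z; split => //; by rewrite -[_ z]/(D (iter (p+n) T z)) iterD.
    have := HN _ Npn _ Ss'; by rewrite [p + n]addnC -addnA [p + s']addnC.
have [f Hf] := choice step.
pose st0 : state X := (G, U, V, [set 0]).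
pose stt k := iter k (fun st => (f st).2) st0.
pose pk k := (f (stt k)).1.
have Inv0 : Inv st0.
  split => //; first by move=> s -> y.
  by move=> n Nn s ->; rewrite addn0.
have InvK : forall k, Inv (stt k).
  elim=> // k IH; have := Hf _ IH; rewrite /stt /= -/(stt k).
  case: (stt k) => [[[W C D] Sm]]; case: (f _) => p st' /=.
  by case.
have QK : forall k, Q (stt k) (pk k, stt k.+1).
  move=> k; have := Hf _ (InvK k); rewrite /pk /stt /=.
  by case: (f _).
have SK : forall k t, uniq t -> all (fun i => i < k) t ->
    (stt k).2 (\sum_(i <- t) pk i).
  elim=> [|k IH] t ut.
    case: t ut => [|a t] //= _; first by rewrite big_nil.
  move=> Hall.
  have := QK k; case E: (stt k) => [[[W C D] Sm]] [_ _ _ -> _] /=.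
  case: (boolP (k \in t)) => kt.
    right; exists (\sum_(i <- rem k t) pk i).
      by have := IH (rem k t) (rem_uniq k ut) (rem_lt ut Hall); rewrite E.
    by rewrite (big_rem _ kt) /= addnC.
  by left; have := IH t ut (nrem_lt kt Hall); rewrite E.
have GK : forall k t, t != [::] -> uniq t -> all (fun i => i < k) t ->
    (n_T T x G `&` N_T T U V) (\sum_(i <- t) pk i).
  elim=> [|k IH] t tn ut; first by case: t tn ut.
  move=> Hall; case: (boolP (k \in t)) => kt; last first.
    apply: IH => //; exact: nrem_lt.
  have Ss := SK k _ (rem_uniq k ut) (rem_lt ut Hall).
  rewrite (big_rem _ kt) /=.
  have := InvK k; have := QK k.
  case: (stt k) Ss => [[[W C D] Sm]] /= Ss [_ Wp Np _ _] [_ _ _ HG HN].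
  split; first by rewrite /n_T /= addnC iterD; exact: HG.
  exact: HN.
exists pk; split.
  by move=> i; have := QK i; case: (stt i) => [[[W C D] Sm]] [].
move=> s sn ss; have [k Hk] := all_lt_ex s.
apply: (GK k) => //. exact: (sorted_uniq (@ltn_trans) (@ltnn)).
Qed.

Section DSec.
Local Open Scope ring_scope.

Lemma eps_net (R : realType) (X : metricType R) (x0 : X) (e : R) :
  compact [set: X] -> 0 < e ->
  exists s : seq X, forall x, exists2 i, (i < size s)%N & (ball (nth x0 s i) e)° x.
Proof.
move=> C e0; apply: contrapT => Hn.
have H : forall s : seq X, exists x, forall i, (i < size s)%N -> ~ (ball (nth x0 s i) e)° x.
  move=> s; apply: contrapT => H'; apply: Hn; exists s => x; apply: contrapT => nx.
  apply: H'; exists x => i Hi bi; apply: nx; by exists i.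
pose Bs (s : seq X) := [set x | forall i, (i < size s)%N -> ~ (ball (nth x0 s i) e)° x].
have FF : ProperFilter (filter_from [set: seq X] Bs).
  apply: filter_from_proper; last by move=> s _; exact: H.
  apply: filter_from_filter; first by exists [::].
  move=> s t _ _; exists (s ++ t) => // y Hy; split => i Hi.
  - have := Hy i; rewrite size_cat nth_cat Hi; apply; exact: ltn_addr.
  - have := Hy (size s + i)%N; rewrite size_cat ltn_add2l nth_cat.
    rewrite (_ : (size s + i < size s)%N = false) ?addKn; first exact.
    by rewrite ltnNge leq_addr.
have [p [_ cp]] := C _ FF (ex_intro2 _ _ [::] I (fun _ _ => I)).
have := cp (Bs [:: p]) (ball p e)°.
case.
- by exists [:: p].
- exact/nbhs_interior/nbhsx_ballx.
move=> y [Hy b]; exact: (Hy 0%N isT b).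
Qed.

Lemma base_ex (R : realType) (X : metricType R) (x0 : X) :
  compact [set: X] -> exists B : nat -> set X, (forall n, open (B n)) /\
    forall W, opene W -> exists n, B n !=set0 /\ B n `<=` W.
Proof.
move=> C.
have hn : forall m : nat, exists s : seq X, forall x,
    exists2 i, (i < size s)%N & (ball (nth x0 s i) (m.+1%:R^-1))° x.
  move=> m; apply: eps_net => //.
have [sf Hsf] := choice hn.
exists (fun n => match @unpickle (nat * nat)%type n with
  | Some (m, i) => (ball (nth x0 (sf m) i) (m.+1%:R^-1))°
  | None => set0 end).
split.
  move=> n; case: (unpickle n) => [[m i]|]; [exact: open_interior|exact: open0].
move=> W [oW [x Wx]].
have : nbhs x W by apply: open_nbhs_nbhs.
move=> /nbhs_ballP [e /= e0 bW].
have [//|m] := @ltr_add_invr R 0%R (e/2) _; first by rewrite divr_gt0.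
rewrite add0r => me.
have [i _ bi] := Hsf m x.
exists (pickle (m, i)); rewrite pickleK; split; first by exists x.
move=> z /interior_subset bz; apply: bW.
have /interior_subset bx := bi.
have := ball_triangle (ball_sym bx) bz.
apply: le_ball; rewrite [e]splitr; apply: lerD; exact: ltW.
Qed.

Lemma baire_compact (R : realType) (X : metricType R) (U : nat -> set X) :
  compact [set: X] -> (forall n, open (U n)) -> (forall n, dense (U n)) ->
  dense (\bigcap_n U n).
Proof.
move=> C oU dU O O0 oO.
have step : forall nV : nat * set X, exists V', opene nV.2 ->
    opene V' /\ closure V' `<=` nV.2 `&` U nV.1.
  move=> [n V]; case: (pselect (opene V)) => [[oV nV]|nV]; last first.
    by exists set0.
  have [x [Vx Ux]] := dU n V nV oV.
  have nb : nbhs x (V `&` U n).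
    by apply: open_nbhs_nbhs; split => //; apply: openI.
  have [B Bx clB] := uniform_regular nb.
  exists B° => _; split.
    by split; [exact: open_interior|exists x].
  apply: subset_trans clB; apply: closure_subset; exact: interior_subset.
have [g Hg] := choice step.
pose Vs := fix Vs n := if n is m.+1 then g (m, Vs m) else O.
have HV : forall n, opene (Vs n) /\ closure (Vs n.+1) `<=` Vs n `&` U n.
  elim=> [|n [oVn _]].
    by split; [split|exact: (proj2 (Hg (0%N, O) (conj oO O0)))].
  have oV1 : opene (Vs n.+1) := proj1 (Hg (n, Vs n) oVn).
  by split; [|exact: (proj2 (Hg (n.+1, Vs n.+1) oV1))].
have dec : forall i j, (i <= j)%N -> Vs j `<=` Vs i.
  move=> i j /subnK <-; elim: (j - i)%N => // k IH.
  rewrite addSn; apply: subset_trans IH.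
  move=> y Vy; have [_ /(_ y)] := HV (k + i)%N.
  by case; [exact: subset_closure|].
have FF : ProperFilter (filter_from [set: nat] Vs).
  apply: filter_from_proper; last by move=> n _; case: (HV n) => -[].
  apply: filter_from_filter; first by exists 0%N.
  move=> i j _ _; exists (maxn i j) => // y Vy; split.
  - by apply: (dec _ _ (leq_maxl i j)).
  - by apply: (dec _ _ (leq_maxr i j)).
have [p [_ cp]] := C _ FF (ex_intro2 _ _ 0%N I (fun _ _ => I)).
have clp : forall n, closure (Vs n) p.
  move=> n B Bp; have := cp (Vs n) B (ex_intro2 _ _ n I (fun _ h => h)) Bp.
  by [].
exists p; split.
  by have [_ /(_ p (clp 1%N)) []] := HV 0%N.
by move=> n _; have [_ /(_ p (clp n.+1)) []] := HV n.
Qed.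

End DSec.

Unset Implicit Arguments.

Theorem proposition5p4 (R : realType) (X : metricType R) (T : X -> X) :
  dynamical_system T ->
  (weakly_mixing T <->
   exists X' : set X, dense X' /\ G_delta X' /\
     forall x, X' x -> forall G U V : set X, opene G -> opene U -> opene V ->
       IP_set (n_T T x G `&` N_T T U V)).
Proof.
move=> [Cmp [x0 [y0 _]] _ cT sT]; split; last first.
  move=> [X' [dX' [_ HX']]] O1 O2 oO1 oO2.
  have [U1 [U2 [oU1 [oU2 sU]]]] := opene_boxin oO1.
  have [V1 [V2 [oV1 [oV2 sV]]]] := opene_boxin oO2.
  have [x [U1x X'x]] := dX' U1 (proj2 oU1) (proj1 oU1).
  have [p [_ Hp]] := HX' x X'x V1 U2 V2 oV1 oU2 oV2.
  have [] := Hp [:: 0%N] isT isT; rewrite big_seq1 => V1x [y [U2y V2y]].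
  exists (p 0%N); exists (x, y); split; first exact: sU.
  by rewrite /= iter_prod; apply: sV.
move=> wm.
have [B [oB HB]] := base_ex x0 Cmp.
pose On n := [set x | forall i j k, @unpickle (nat * nat * nat)%type n = Some (i, j, k) ->
  B i !=set0 -> B j !=set0 -> B k !=set0 ->
  exists p, B i (iter p T x) /\ N_T T (B j) (B k) p].
have oOn : forall n, open (On n).
  move=> n; case E: (@unpickle (nat * nat * nat)%type n) => [[[i j] k]|]; last first.
    rewrite (_ : On n = setT); first exact: openT.
    by apply/seteqP; split => // x _ i j k; rewrite E.
  case: (pselect (B i !=set0 /\ B j !=set0 /\ B k !=set0)) => [[ni [nj nk]]|nn].
    rewrite (_ : On n = \bigcup_(p in N_T T (B j) (B k)) iter p T @^-1` (B i)).
      by apply: bigcup_open => p _; apply: open_pre.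
    apply/seteqP; split => x.
      by move=> /(_ i j k E ni nj nk) [p [Bp Np]]; exists p.
    by move=> [p Np Bp] i' j' k'; rewrite E => -[<- <- <-] _ _ _; exists p.
  rewrite (_ : On n = setT); first exact: openT.
  apply/seteqP; split => // x _ i' j' k'; rewrite E => -[<- <- <-] ni nj nk.
  by case: nn.
have dOn : forall n, dense (On n).
  move=> n W W0 oW; case E: (@unpickle (nat * nat * nat)%type n) => [[[i j] k]|]; last first.
    by case: W0 => w Ww; exists w; split => // i j k; rewrite E.
  case: (pselect (B i !=set0 /\ B j !=set0 /\ B k !=set0)) => [[ni [nj nk]]|nn].
    have [A [A' [oA [oA' HA]]]] := wm_collapse cT wm (conj oW W0) (conj (oB i) ni)
      (conj (oB j) nj) (conj (oB k) nk).
    have [p /HA [[y [Wy Bpy]] Np]] := wm_trans wm oA oA'.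
    exists y; split => // i' j' k'; rewrite E => -[<- <- <-] _ _ _; by exists p.
  case: W0 => w Ww; exists w; split => // i' j' k'; rewrite E => -[<- <- <-] ni nj nk.
  by case: nn.
exists (\bigcap_n On n); split; first exact: baire_compact.
split; first by exists On.
move=> x X'x G U V oG oU oV.
have P2 : forall W E F, opene W -> opene E -> opene F ->
    exists p, W (iter p T x) /\ N_T T E F p.
  move=> W E F oW oE oF.
  have [i [ni Bi]] := HB W oW.
  have [j [nj Bj]] := HB E oE.
  have [k [nk Bk]] := HB F oF.
  have := X'x (pickle (i, j, k)) I i j k; rewrite pickleK.
  move=> /(_ erefl ni nj nk) [p [Bp [z [Bz Bz']]]].
  by exists p; split; [apply: Bi|exists z; split; [apply: Bj|apply: Bk]].
have P1 : forall W E F, opene W -> opene E -> opene F ->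
    exists p, (0 < p)%N /\ W (iter p T x) /\ N_T T E F p.
  move=> W E F oW oE oF.
  have [p [Wp [z [Ez Fz]]]] := P2 _ E _ (opene_pre 1 cT sT oW) oE (opene_pre 1 cT sT oF).
  by exists p.+1; split => //; split => //; exists z.
apply: ip_construct => // W C D oW oC oD.
have [E [F [oE [oF HEF]]]] := wm_collapse cT wm oC oD oW oW.
have [p [p0 [Wp /HEF [NCD [y [Wy Wpy]]]]]] := P1 W E F oW oE oF.
by exists p; split => //; split => //; split => //; exists y.
Qed.
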